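(* Let $f \in \mathbb{N}_0[x^{\pm 1}]$ satisfy $f(1) > 3$ and $|\operatorname{supp}(f)| > 1$. Then $f$ can be written as $f = g + h$ with $g, h$ irreducible elements of $\mathbb{N}_0[x^{\pm 1}]$.
   Context: $\mathbb{N}_0[x^{\pm 1}]$ denotes the semiring of Laurent polynomials in $x$ with nonnegative integer coefficients, under the usual addition and multiplication. For $f = \sum_i c_i x^{k_i}$ with all $c_i$ positive integers and the $k_i$ distinct integers, $\operatorname{supp}(f) = \{k_i\}$ is the set of exponents appearing in $f$, and $f(1)=\sum_i c_i$. The units of $\mathbb{N}_0[x^{\pm 1}]$ are exactly the monomials $x^k$, $k \in \mathbb{Z}$. An element $f$ is irreducible if it is nonzero, not a unit, and whenever $f = gh$ with $g,h \in \mathbb{N}_0[x^{\pm 1}]$, one of $g,h$ is a unit. *)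

(* Defs.v *)
(* with mathcomp-finmap.
   Laurent polynomials in N_0[x^{+-1}] are modelled as finitely supported
   functions  int -> nat  (exponent |-> coefficient), default value 0. *)
From HB Require Import structures.
From mathcomp Require Import all_boot all_order all_algebra.
From mathcomp Require Import finmap.
Set Implicit Arguments. Unset Strict Implicit. Unset Printing Implicit Defensive.
Local Open Scope fset_scope.

Definition lpoly := {fsfun int -> nat with 0%N}.

Definition lsupp (f : lpoly) : {fset int} := finsupp f.

Definition leval1 (f : lpoly) : nat := (\sum_(k <- lsupp f) f k)%N.

Definition lzero : lpoly := [fsfun n in (fset0 : {fset int}) => 0%N].

Definition lmono (k : int) : lpoly := [fsfun n in [fset k] => 1%N].

Definition ladd (g h : lpoly) : lpoly :=
  [fsfun n in lsupp g `|` lsupp h => (g n + h n)%N].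

Definition lmul (g h : lpoly) : lpoly :=
  [fsfun n in [fset (i + j)%R | i in lsupp g, j in lsupp h] =>
     (\sum_(i <- lsupp g) g i * h (n - i)%R)%N].

Definition lunit (u : lpoly) : Prop := exists v : lpoly, lmul u v = lmono 0.

Definition lirreducible (f : lpoly) : Prop :=
  f <> lzero /\ ~ lunit f /\
  forall g h : lpoly, f = lmul g h -> lunit g \/ lunit h.

(* Main.v *)
Require Import Defs.
From mathcomp Require Import all_boot all_order all_algebra.
From mathcomp Require Import finmap zify.
From Stdlib Require Import Classical.
Set Implicit Arguments. Unset Strict Implicit. Unset Printing Implicit Defensive.
Import Order.TTheory GRing.Theory Num.Theory.
Local Open Scope fset_scope.
Implicit Types (u v g h f : lpoly).

Lemma lsuppE (f : lpoly) n : (n \in lsupp f) = (f n != 0%N).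
Proof. by rewrite /lsupp mem_finsupp. Qed.

Lemma laddE g h n : ladd g h n = (g n + h n)%N.
Proof.
rewrite /ladd fsfunE in_fsetU !lsuppE.
by case: ifP => // /negbT; rewrite negb_or !negbK => /andP[/eqP-> /eqP->].
Qed.

Lemma lzeroE n : lzero n = 0%N.
Proof. by rewrite /lzero fsfunE. Qed.

Lemma lmonoE k n : lmono k n = (n == k) :> nat.
Proof. by rewrite /lmono fsfunE in_fset1; case: (n == k). Qed.

Lemma lmulE u v n : lmul u v n = (\sum_(i <- lsupp u) u i * v (n - i)%R)%N.
Proof.
rewrite /lmul fsfunE; case: ifP => // Hn.
rewrite big_seq big1 // => i; rewrite lsuppE => Hi.
case: (v (n - i)%R =P 0%N) => [->|/eqP Hv]; first by rewrite muln0.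
exfalso; move/negP: Hn; apply; apply/imfset2P.
exists i; first by rewrite lsuppE.
exists (n - i)%R; first by rewrite lsuppE.
by rewrite addrC subrK.
Qed.

Lemma seq_min (s : seq int) : s != [::] -> exists x, x \in s /\ forall y, y \in s -> (x <= y)%R.
Proof.
elim: s => // a s IH _.
case: (s =P [::]) => [->|/eqP /IH [x [xs Hx]]].
  by exists a; split; [rewrite inE eqxx | move=> y; rewrite inE => /eqP ->].
case: (lerP a x) => H.
  exists a; split; first by rewrite inE eqxx.
  move=> y; rewrite inE => /orP [/eqP->//|/Hx]; lia.
exists x; split; first by rewrite inE xs orbT.
move=> y; rewrite inE => /orP [/eqP->|/Hx//]; lia.
Qed.

Lemma seq_max (s : seq int) : s != [::] -> exists x, x \in s /\ forall y, y \in s -> (y <= x)%R.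
Proof.
elim: s => // a s IH _.
case: (s =P [::]) => [->|/eqP /IH [x [xs Hx]]].
  by exists a; split; [rewrite inE eqxx | move=> y; rewrite inE => /eqP ->].
case: (lerP x a) => H.
  exists a; split; first by rewrite inE eqxx.
  move=> y; rewrite inE => /orP [/eqP->//|/Hx]; lia.
exists x; split; first by rewrite inE xs orbT.
move=> y; rewrite inE => /orP [/eqP->|/Hx//]; lia.
Qed.

Lemma supp_min (u : lpoly) p : u p != 0%N ->
  exists i, u i != 0%N /\ forall i', u i' != 0%N -> (i <= i')%R.
Proof.
move=> Hp.
have: (lsupp u : seq int) != [::].
  by apply/eqP => E; move: (Hp); rewrite -lsuppE; rewrite -[_ \in _]/(p \in (lsupp u : seq int)) E.
move/seq_min => [x [xs Hx]]; exists x; split; first by rewrite -lsuppE.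
by move=> i' Hi'; apply: Hx; rewrite -[_ \in _]/(i' \in lsupp u) lsuppE.
Qed.

Lemma supp_max (u : lpoly) p : u p != 0%N ->
  exists i, u i != 0%N /\ forall i', u i' != 0%N -> (i' <= i)%R.
Proof.
move=> Hp.
have: (lsupp u : seq int) != [::].
  by apply/eqP => E; move: (Hp); rewrite -lsuppE; rewrite -[_ \in _]/(p \in (lsupp u : seq int)) E.
move/seq_max => [x [xs Hx]]; exists x; split; first by rewrite -lsuppE.
by move=> i' Hi'; apply: Hx; rewrite -[_ \in _]/(i' \in lsupp u) lsuppE.
Qed.

Lemma lmul_term u v i n : (u i * v (n - i)%R <= lmul u v n)%N.
Proof.
rewrite lmulE; case: (u i =P 0%N) => [->|/eqP Hi]; first by [].
by rewrite (big_fsetD1 _ (_ : i \in lsupp u)) ?lsuppE // leq_addr.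
Qed.

Lemma lmul_term2 u v i i' n : i != i' ->
  (u i * v (n - i)%R + u i' * v (n - i')%R <= lmul u v n)%N.
Proof.
move=> Hii; rewrite lmulE.
case: (u i =P 0%N) => [->|/eqP Hi].
  by rewrite mul0n add0n -lmulE lmul_term.
case: (u i' =P 0%N) => [->|/eqP Hi'].
  by rewrite mul0n addn0 -lmulE lmul_term.
rewrite (big_fsetD1 _ (_ : i \in lsupp u)) ?lsuppE //.
rewrite (big_fsetD1 _ (_ : i' \in lsupp u `\ i)) ?in_fsetD1 ?lsuppE 1?eq_sym ?Hii //.
by rewrite /= addnA leq_addr.
Qed.

Lemma lmul_pos u v i j : (0 < u i)%N -> (0 < v j)%N -> (0 < lmul u v (i + j)%R)%N.
Proof.
move=> Hi Hj; apply: leq_trans (lmul_term u v i (i + j)%R).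
by rewrite addrAC subrr add0r muln_gt0 Hi Hj.
Qed.

Lemma lmul_zero_below u v i1 j1 n :
  (forall i, u i != 0%N -> (i1 <= i)%R) -> (forall j, v j != 0%N -> (j1 <= j)%R) ->
  (n < i1 + j1)%R -> lmul u v n = 0%N.
Proof.
move=> Hu Hv Hn; rewrite lmulE big_seq big1 // => i; rewrite lsuppE => /Hu Hi.
case: (v (n - i)%R =P 0%N) => [->|/eqP /Hv H]; first by rewrite muln0.
exfalso; lia.
Qed.

Lemma lmul_zero_above u v i2 j2 n :
  (forall i, u i != 0%N -> (i <= i2)%R) -> (forall j, v j != 0%N -> (j <= j2)%R) ->
  (i2 + j2 < n)%R -> lmul u v n = 0%N.
Proof.
move=> Hu Hv Hn; rewrite lmulE big_seq big1 // => i; rewrite lsuppE => /Hu Hi.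
case: (v (n - i)%R =P 0%N) => [->|/eqP /Hv H]; first by rewrite muln0.
exfalso; lia.
Qed.

Lemma lmul_at_min u v i1 j1 :
  (forall i, u i != 0%N -> (i1 <= i)%R) -> (forall j, v j != 0%N -> (j1 <= j)%R) ->
  u i1 != 0%N -> lmul u v (i1 + j1)%R = (u i1 * v j1)%N.
Proof.
move=> Hu Hv Hi1; rewrite lmulE (big_fsetD1 _ (_ : i1 \in lsupp u)) ?lsuppE //.
rewrite /= [X in (_ + X)%N]big_seq big1 ?addn0; first by rewrite addrAC subrr add0r.
move=> i; rewrite in_fsetD1 lsuppE => /andP [Hne /Hu Hi].
case: (v (i1 + j1 - i)%R =P 0%N) => [->|/eqP /Hv H]; first by rewrite muln0.
exfalso; move/eqP: Hne; lia.
Qed.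

Lemma lmul_at_max u v i2 j2 :
  (forall i, u i != 0%N -> (i <= i2)%R) -> (forall j, v j != 0%N -> (j <= j2)%R) ->
  u i2 != 0%N -> lmul u v (i2 + j2)%R = (u i2 * v j2)%N.
Proof.
move=> Hu Hv Hi1; rewrite lmulE (big_fsetD1 _ (_ : i2 \in lsupp u)) ?lsuppE //.
rewrite /= [X in (_ + X)%N]big_seq big1 ?addn0; first by rewrite addrAC subrr add0r.
move=> i; rewrite in_fsetD1 lsuppE => /andP [Hne /Hu Hi].
case: (v (i2 + j2 - i)%R =P 0%N) => [->|/eqP /Hv H]; first by rewrite muln0.
exfalso; move/eqP: Hne; lia.
Qed.

Lemma lmul_single_l u v k n : (forall i, u i != 0%N -> i = k) ->
  lmul u v n = (u k * v (n - k)%R)%N.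
Proof.
move=> Hu; rewrite lmulE.
case: (u k =P 0%N) => [Hk|/eqP Hk].
  rewrite Hk mul0n big_seq big1 // => i; rewrite lsuppE => Hi.
  by move: (Hi); rewrite (Hu _ Hi) Hk.
rewrite (big_fsetD1 _ (_ : k \in lsupp u)) ?lsuppE //.
rewrite /= [X in (_ + X)%N]big_seq big1 ?addn0 // => i.
by rewrite in_fsetD1 lsuppE => /andP [Hne /Hu Hi]; rewrite Hi eqxx in Hne.
Qed.

Lemma lmul_single_r u v l n : (forall j, v j != 0%N -> j = l) ->
  lmul u v n = (u (n - l)%R * v l)%N.
Proof.
move=> Hv; rewrite lmulE.
case: (u (n - l)%R =P 0%N) => [Hk|/eqP Hk].
  rewrite Hk mul0n big_seq big1 // => i; rewrite lsuppE => Hi.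
  case: (v (n - i)%R =P 0%N) => [->|/eqP /Hv H]; first by rewrite muln0.
  have -> : i = (n - l)%R by rewrite -H; lia.
  by rewrite Hk.
rewrite (big_fsetD1 _ (_ : (n - l)%R \in lsupp u)) ?lsuppE //.
have -> : (n - (n - l))%R = l by lia.
rewrite /= [X in (_ + X)%N]big_seq big1 ?addn0 // => i.
rewrite in_fsetD1 lsuppE => /andP [Hne Hi].
case: (v (n - i)%R =P 0%N) => [->|/eqP /Hv H]; first by rewrite muln0.
by exfalso; move/eqP: Hne; apply; rewrite -H; lia.
Qed.

Lemma lmono_unit k : lunit (lmono k).
Proof.
exists (lmono (- k)%R); apply/fsfunP => n.
rewrite (@lmul_single_l _ _ k); last first.
  by move=> i; rewrite lmonoE; case: (i =P k).
rewrite !lmonoE eqxx mul1n.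
case: (n =P 0%R) => [->|Hn]; first by rewrite sub0r eqxx.
by case: (n - k =P - k)%R => // H; exfalso; apply: Hn; lia.
Qed.

Lemma single_unit u k : (forall i, u i != 0%N -> i = k) -> u k = 1%N -> lunit u.
Proof.
move=> Hu Hk; suff -> : u = lmono k by apply: lmono_unit.
apply/fsfunP => n; rewrite lmonoE.
case: (n =P k) => [->//|Hn]; case: (u n =P 0%N) => [->//|/eqP /Hu]; done.
Qed.

Lemma not_unit2 g p q : p != q -> g p != 0%N -> g q != 0%N -> ~ lunit g.
Proof.
move=> Hpq Hp Hq [v Hv].
case: (boolP [exists j : lsupp v, true]) => [/existsP [[j Hj] _]|Hne].
  have H1 := @lmul_pos g v p j; have H2 := @lmul_pos g v q j.
  rewrite Hv !lmonoE in H1 H2.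
  rewrite lsuppE in Hj.
  have := H1 _ _; have := H2 _ _; rewrite !lt0n.
  move=> /(_ Hq Hj) /eqP; case: eqP => // E1 _.
  move=> /(_ Hp Hj) /eqP; case: eqP => // E2 _.
  by move/eqP: Hpq; apply; move: E1 E2; lia.
have : lmul g v 0%R = 0%N.
  rewrite lmulE big_seq big1 // => i _.
  case: (v (0 - i)%R =P 0%N) => [->|/eqP H]; first by rewrite muln0.
  exfalso; move/negP: Hne; apply; apply/existsP.
  have Hm : (0 - i)%R \in lsupp v by rewrite lsuppE.
  by exists [` Hm].
by rewrite Hv lmonoE eqxx.
Qed.

Definition config g := exists (i1 i2 j1 j2 : int) (a b c d : nat),
  (i1 < i2)%R /\ (j1 < j2)%R /\ (0 < a)%N /\ (0 < b)%N /\ (0 < c)%N /\ (0 < d)%N /\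
  g (i1 + j1)%R = (a * c)%N /\ g (i2 + j2)%R = (b * d)%N /\
  (forall n, g n != 0%N -> (i1 + j1 <= n)%R /\ (n <= i2 + j2)%R) /\
  (a * d <= g (i1 + j2)%R)%N /\ (b * c <= g (i2 + j1)%R)%N /\
  ((i1 + j2)%R = (i2 + j1)%R -> (a * d + b * c <= g (i1 + j2)%R)%N).

Definition two_pts u := exists p q, p != q /\ u p != 0%N /\ u q != 0%N.

Lemma core_config u v : two_pts u -> two_pts v -> config (lmul u v).
Proof.
move=> [p [q [Hpq [Hp Hq]]]] [p' [q' [Hpq' [Hp' Hq']]]].
have [i1 [Hi1 Hmi]] := supp_min Hp.
have [i2 [Hi2 HMi]] := supp_max Hp.
have [j1 [Hj1 Hmj]] := supp_min Hp'.
have [j2 [Hj2 HMj]] := supp_max Hp'.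
have Hii : (i1 < i2)%R.
  have := Hmi _ Hp; have := Hmi _ Hq; have := HMi _ Hp; have := HMi _ Hq.
  move/eqP: Hpq; lia.
have Hjj : (j1 < j2)%R.
  have := Hmj _ Hp'; have := Hmj _ Hq'; have := HMj _ Hp'; have := HMj _ Hq'.
  move/eqP: Hpq'; lia.
exists i1, i2, j1, j2, (u i1), (u i2), (v j1), (v j2).
do 6 (split; first by rewrite // lt0n).
split; first exact: lmul_at_min.
split; first exact: lmul_at_max.
split.
- move=> n Hn; split.
    case: (lerP (i1 + j1)%R n) => // H; exfalso; move/eqP: Hn; apply.
    exact: (lmul_zero_below Hmi Hmj).
  case: (lerP n (i2 + j2)%R) => // H; exfalso; move/eqP: Hn; apply.
  exact: (lmul_zero_above HMi HMj).
split.
- by have := lmul_term u v i1 (i1 + j2)%R; have -> : (i1 + j2 - i1)%R = j2 by lia.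
split.
- by have := lmul_term u v i2 (i2 + j1)%R; have -> : (i2 + j1 - i2)%R = j1 by lia.
- move=> E.
  have Hne : i1 != i2 by apply/eqP; lia.
  have := lmul_term2 u v (i1 + j2)%R Hne.
  have -> : (i1 + j2 - i1)%R = j2 by lia.
  have -> : (i1 + j2 - i2)%R = j1 by lia.
  by [].
Qed.

Lemma one_pt_or_two u : (exists k, forall i, u i != 0%N -> i = k) \/ two_pts u.
Proof.
case: (boolP [exists j : lsupp u, true]) => [/existsP [[j Hj] _]|Hne].
  case: (boolP [exists j' : lsupp u, val j' != j]) => [/existsP [[j' Hj'] /= Hne]|Hall].
    by right; exists j', j; rewrite -!lsuppE.
  left; exists j => i Hi; apply/eqP; apply/negPn; move/negP: Hall => Hall.
  apply/negP => Hij; apply: Hall; apply/existsP.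
  have Hm : i \in lsupp u by rewrite lsuppE.
  by exists [` Hm].
left; exists 0%R => i Hi; exfalso; move/negP: Hne; apply; apply/existsP.
have Hm : i \in lsupp u by rewrite lsuppE.
  by exists [` Hm].
Qed.

Lemma gen_irr g : (exists n0, g n0 = 1%N) -> two_pts g -> ~ config g -> lirreducible g.
Proof.
move=> [n0 Hn0] H2 Hc.
have [p [q [Hpq [Hp Hq]]]] := H2.
split; first by move=> E; move: Hp; rewrite E lzeroE.
split; first exact: not_unit2 Hpq Hp Hq.
move=> u v E.
case: (one_pt_or_two u) => [[k Hk]|Hu].
  have Eg : forall n, g n = (u k * v (n - k)%R)%N by move=> n; rewrite E; apply: lmul_single_l.
  case: (u k =P 1%N) => [H1|H1]; first by left; apply: (single_unit Hk).
  exfalso; have Hp' := Eg p; have Hn0' := Eg n0; rewrite Hn0 in Hn0'.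
  move: H1 Hp' Hp Hn0'; case: (u k) => [|[|c]] H1 Hp' Hp0 Hn0' //.
  by move/esym/eqP: Hn0'; rewrite muln_eq1.
case: (one_pt_or_two v) => [[k Hk]|Hv].
  have Eg : forall n, g n = (u (n - k)%R * v k)%N by move=> n; rewrite E; apply: lmul_single_r.
  case: (v k =P 1%N) => [H1|H1]; first by right; apply: (single_unit Hk).
  exfalso; have Hp' := Eg p; have Hn0' := Eg n0; rewrite Hn0 in Hn0'.
  move: H1 Hp' Hp Hn0'; case: (v k) => [|[|c]] H1 Hp' Hp0 Hn0' //.
    by rewrite Hp' muln0 in Hp0.
  by move/esym/eqP: Hn0'; rewrite muln_eq1 andbC.
by exfalso; apply: Hc; rewrite E; apply: core_config.
Qed.

Lemma amgm (a b c d x : nat) : (a * d + b * c <= x)%N -> (x * x < 4 * (a * c) * (b * d))%N -> False.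
Proof.
move=> H1 H2.
have H3 : ((a * d + b * c) * (a * d + b * c) <= x * x)%N by apply: leq_mul.
have H4 : (4 * (a * c) * (b * d) <= (a * d + b * c) * (a * d + b * c))%N.
  have E : (4 * (a * c) * (b * d) = 4 * ((a * d) * (b * c)))%N by lia.
  rewrite E; move: (a * d)%N (b * c)%N => p q.
  case: (leqP p q) => H.
    have [r ->] : exists r, q = (p + r)%N by exists (q - p)%N; lia.
    nia.
  have [r ->] : exists r, p = (q + r)%N by exists (p - q)%N; lia.
  nia.
lia.
Qed.

Lemma irr_top g (Mg : int) :
  g Mg != 0%N ->
  (forall n, g n != 0%N -> (n <= Mg)%R) ->
  (exists n0, g n0 = 1%N) ->
  (exists e0, e0 != Mg /\ g e0 != 0%N) ->
  (forall e e', g e != 0%N -> g e' != 0%N -> e != Mg -> e' != Mg ->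
     (e + e <= e' + Mg)%R /\ ((e + e)%R = (e' + Mg)%R -> (g e * g e < 4 * g e' * g Mg)%N)) ->
  lirreducible g.
Proof.
move=> HM Hle H1 [e0 [He0 He0']] H4.
apply: gen_irr => //; first by exists e0, Mg.
move=> [i1 [i2 [j1 [j2 [a [b [c [d [Hi [Hj [Ha [Hb [Hc [Hd [E1 [E2 [Hout [T1 [T2 T3]]]]]]]]]]]]]]]]]]].
have Hac : g (i1 + j1)%R != 0%N by rewrite E1 muln_eq0 negb_or -!lt0n Ha Hc.
have Hbd : g (i2 + j2)%R != 0%N by rewrite E2 muln_eq0 negb_or -!lt0n Hb Hd.
have Had : g (i1 + j2)%R != 0%N by rewrite -lt0n; apply: leq_trans T1; rewrite muln_gt0 Ha Hd.
have Hbc : g (i2 + j1)%R != 0%N by rewrite -lt0n; apply: leq_trans T2; rewrite muln_gt0 Hb Hc.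
have EM : Mg = (i2 + j2)%R.
  have := Hle _ Hbd; have := (Hout _ HM).2; lia.
subst Mg.
have [A1 _] := H4 _ _ Hbc Hac ltac:(apply/eqP; lia) ltac:(apply/eqP; lia).
have [A2 A3] := H4 _ _ Had Hac ltac:(apply/eqP; lia) ltac:(apply/eqP; lia).
have Et : (i1 + j2)%R = (i2 + j1)%R by lia.
have := A3 ltac:(lia); rewrite E1 E2.
by apply: amgm (T3 Et).
Qed.

Lemma irr_bot g (mg : int) :
  g mg != 0%N ->
  (forall n, g n != 0%N -> (mg <= n)%R) ->
  (exists n0, g n0 = 1%N) ->
  (exists e0, e0 != mg /\ g e0 != 0%N) ->
  (forall e e', g e != 0%N -> g e' != 0%N -> e != mg -> e' != mg ->
     (e' + mg <= e + e)%R /\ ((e + e)%R = (e' + mg)%R -> (g e * g e < 4 * g e' * g mg)%N)) ->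
  lirreducible g.
Proof.
move=> HM Hle H1 [e0 [He0 He0']] H4.
apply: gen_irr => //; first by exists e0, mg.
move=> [i1 [i2 [j1 [j2 [a [b [c [d [Hi [Hj [Ha [Hb [Hc [Hd [E1 [E2 [Hout [T1 [T2 T3]]]]]]]]]]]]]]]]]]].
have Hac : g (i1 + j1)%R != 0%N by rewrite E1 muln_eq0 negb_or -!lt0n Ha Hc.
have Hbd : g (i2 + j2)%R != 0%N by rewrite E2 muln_eq0 negb_or -!lt0n Hb Hd.
have Had : g (i1 + j2)%R != 0%N by rewrite -lt0n; apply: leq_trans T1; rewrite muln_gt0 Ha Hd.
have Hbc : g (i2 + j1)%R != 0%N by rewrite -lt0n; apply: leq_trans T2; rewrite muln_gt0 Hb Hc.
have EM : mg = (i1 + j1)%R.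
  have := Hle _ Hac; have := (Hout _ HM).1; lia.
subst mg.
have [A1 _] := H4 _ _ Hbc Hbd ltac:(apply/eqP; lia) ltac:(apply/eqP; lia).
have [A2 A3] := H4 _ _ Had Hbd ltac:(apply/eqP; lia) ltac:(apply/eqP; lia).
have Et : (i1 + j2)%R = (i2 + j1)%R by lia.
have := A3 ltac:(lia); rewrite E1 E2.
move=> H; apply: (amgm (T3 Et)); lia.
Qed.

Lemma lmul_nz u v n : lmul u v n != 0%N -> exists i, u i != 0%N /\ v (n - i)%R != 0%N.
Proof.
move=> H; apply/not_all_not_ex => Hall; move/eqP: H; apply.
rewrite lmulE big_seq big1 // => i _.
case: (u i =P 0%N) => [->//|/eqP Hu]; case: (v (n - i)%R =P 0%N) => [->|/eqP Hv]; first by rewrite muln0.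
by exfalso; apply: (Hall i).
Qed.

Lemma two_pts_contra u v p q j : p != q -> u p != 0%N -> u q != 0%N -> v j != 0%N ->
  (forall n n', lmul u v n != 0%N -> lmul u v n' != 0%N -> n = n') -> False.
Proof.
move=> Hpq Hp Hq Hj H.
have := H (p + j)%R (q + j)%R; rewrite -!lt0n !lmul_pos ?lt0n // => /(_ isT isT) E.
by move/eqP: Hpq; apply; lia.
Qed.

Lemma two_pts_contra_r u v p q i : p != q -> v p != 0%N -> v q != 0%N -> u i != 0%N ->
  (forall n n', lmul u v n != 0%N -> lmul u v n' != 0%N -> n = n') -> False.
Proof.
move=> Hpq Hp Hq Hj H.
have := H (i + p)%R (i + q)%R; rewrite -!lt0n !lmul_pos ?lt0n // => /(_ isT isT) E.
by move/eqP: Hpq; apply; lia.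
Qed.

Lemma irr_two g k : g k = 2%N -> (forall n, n != k -> g n = 0%N) -> lirreducible g.
Proof.
move=> Hk Hn.
have Hsing : forall n n', g n != 0%N -> g n' != 0%N -> n = n'.
  move=> n n' H1 H2; case: (n =P k) => [->|/eqP /Hn E]; last by rewrite E in H1.
  by case: (n' =P k) => [->//|/eqP /Hn E]; rewrite E in H2.
have Hs : forall i, g i != 0%N -> i = k by move=> i Hi; apply: Hsing Hi _; rewrite Hk.
split; first by move=> E; move: Hk; rewrite E lzeroE.
split.
  move=> [v Hv]; have := lmul_single_l v 0%R Hs; rewrite Hv lmonoE eqxx Hk; lia.
move=> u v E.
have : lmul u v k != 0%N by rewrite -E Hk.
move=> /lmul_nz [i [Hui Hvi]].
rewrite E in Hsing.
case: (one_pt_or_two u) => [[k1 Hk1]|[p [q [Hpq [Hp Hq]]]]]; last first.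
  by exfalso; apply: (two_pts_contra Hpq Hp Hq Hvi Hsing).
case: (one_pt_or_two v) => [[l Hl]|[p [q [Hpq [Hp Hq]]]]]; last first.
  by exfalso; apply: (two_pts_contra_r Hpq Hp Hq Hui Hsing).
have Ei := Hk1 _ Hui; have El := Hl _ Hvi.
have H2 := lmul_single_l v k Hk1; rewrite -E Hk in H2.
rewrite -Ei in H2 Hk1; rewrite -El in Hl.
case: (u i =P 1%N) => [H1|H1]; first by left; apply: single_unit Hk1 H1.
right; apply: single_unit Hl _.
move: H1 H2; case: (u i) => [|[|c]] //.
by case: (v (k - i)%R) => [|[|[|d]]]; rewrite ?muln0 ?muln1 //; lia.
Qed.

Definition lsel (f : lpoly) (w : int -> nat -> nat) : lpoly :=
  [fsfun n in lsupp f => w n (f n)].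

Lemma lselE f w n : lsel f w n = if f n == 0%N then 0%N else w n (f n).
Proof. by rewrite /lsel fsfunE lsuppE; case: (f n == 0%N). Qed.

Definition Goal f := exists g h : lpoly, lirreducible g /\ lirreducible h /\ f = ladd g h.

Lemma decomp f w : (forall n, f n != 0%N -> (w n (f n) <= f n)%N) ->
  lirreducible (lsel f w) -> lirreducible (lsel f (fun n c => c - w n c)%N) -> Goal f.
Proof.
move=> Hw H1 H2; exists (lsel f w), (lsel f (fun n c => c - w n c)%N); do 2!split => //.
apply/fsfunP => n; rewrite laddE !lselE.
by case: (f n =P 0%N) => [->//|/eqP Hn]; rewrite subnKC // Hw.
Qed.

Lemma mass3 f a b c : a != b -> a != c -> b != c ->
  (forall n, n != a -> n != b -> n != c -> f n = 0%N) ->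
  leval1 f = (f a + f b + f c)%N.
Proof.
move=> Hab Hac Hbc Hn.
rewrite /leval1 (_ : (\sum_(n <- lsupp f) f n = \sum_(n <- a |` (b |` [fset c])) f n)%N).
- rewrite big_fsetU1; last by rewrite !inE negb_or Hab Hac.
  rewrite big_fsetU1; last by rewrite !inE Hbc.
  by rewrite big_seq_fset1 /= addnA.
apply: big_fset_incl.
- apply/fsubsetP => n; rewrite lsuppE !inE => H.
  by apply/negPn/negP; rewrite !negb_or => /and3P [H1 H2 H3]; rewrite Hn in H.
- by move=> n _; rewrite lsuppE negbK => /eqP.
Qed.

Lemma card2 (A : {fset int}) : (1 < #|` A|)%N -> exists p q, p != q /\ p \in A /\ q \in A.
Proof.
case: (fset_0Vmem A) => [->|[p Hp]]; first by rewrite cardfs0.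
rewrite (cardfsD1 p) Hp add1n ltnS lt0n cardfs_eq0.
case: (fset_0Vmem (A `\ p)) => [->|[q Hq]]; first by rewrite eqxx.
move=> _; move: Hq; rewrite in_fsetD1 => /andP [Hqp Hq].
by exists q, p; split.
Qed.

Lemma irr_top_s g (Mg L : int) :
  g Mg != 0%N ->
  (forall n, g n != 0%N -> (L <= n)%R /\ (n <= Mg)%R) ->
  (exists n0, g n0 = 1%N) ->
  (exists e0, e0 != Mg /\ g e0 != 0%N) ->
  (forall e, g e != 0%N -> e != Mg -> (e + e < L + Mg)%R) ->
  lirreducible g.
Proof.
move=> H1 H2 H3 H4 H5; apply: (irr_top H1) => //.
  by move=> n /H2 [].
move=> e e' He He' Hne Hne'; have := H5 _ He Hne; have := (H2 _ He').1.
split; first lia. move=> E; exfalso; lia.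
Qed.

Lemma irr_bot_s g (mg L : int) :
  g mg != 0%N ->
  (forall n, g n != 0%N -> (mg <= n)%R /\ (n <= L)%R) ->
  (exists n0, g n0 = 1%N) ->
  (exists e0, e0 != mg /\ g e0 != 0%N) ->
  (forall e, g e != 0%N -> e != mg -> (L + mg < e + e)%R) ->
  lirreducible g.
Proof.
move=> H1 H2 H3 H4 H5; apply: (irr_bot H1) => //.
  by move=> n /H2 [].
move=> e e' He He' Hne Hne'; have := H5 _ He Hne; have := (H2 _ He').2.
split; first lia. move=> E; exfalso; lia.
Qed.

Ltac des := repeat (case: ifP => ?).

Lemma caseIa f (m M mu : int) :
  (m < M)%R -> f m != 0%N -> f M != 0%N -> (forall n, f n = 0%N \/ ((m <= n)%R /\ (n <= M)%R)) ->
  (mu + mu = m + M)%R -> f mu != 0%N ->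
  ((2 <= f mu)%N \/ exists e, f e != 0%N /\ (m + M < e + e)%R /\ (e < M)%R) ->
  Goal f.
Proof.
move=> HmM Hfm HfM Hr Hmu Hfmu Hcase.
pose w := fun (n : int) (c : nat) => if n == m then 1%N else if n == mu then (c - 1)%N
  else if (m + M < n + n)%R && (n < M)%R then c else 0%N.
apply: (@decomp _ w).
- by move=> n Hn; rewrite /w; des; lia.
- have Gm : lsel f w m = 1%N by rewrite lselE /w eqxx (negbTE Hfm).
  apply: (@irr_bot_s _ m (M - 1)%R).
  + by rewrite Gm.
  + by move=> n; rewrite lselE; have := Hr n; rewrite /w; des; lia.
  + by exists m.
  + case: Hcase => [H2|[e [He1 [He2 He3]]]].
      exists mu; rewrite lselE /w (negbTE Hfmu); des; lia.
    exists e; rewrite lselE /w (negbTE He1); des; lia.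
  + by move=> e; have := Hr e; rewrite !lselE /w; des; lia.
- have GM : lsel f (fun n c => c - w n c)%N M = f M.
    rewrite lselE /w (negbTE HfM); des; lia.
  apply: (@irr_top _ M).
  + by rewrite GM.
  + by move=> n; rewrite lselE; have := Hr n; des; lia.
  + by exists mu; rewrite lselE /w (negbTE Hfmu); des; lia.
  + by exists mu; rewrite lselE /w (negbTE Hfmu); des; lia.
  + move=> e e'; have := Hr e; have := Hr e'; rewrite GM !lselE /w.
    des; move=> *; (split; [lia | move=> *; first [lia | nia]]).
Qed.

Lemma caseIb1 f (m M mu : int) :
  (m < M)%R -> f m != 0%N -> f M != 0%N -> (forall n, f n = 0%N \/ ((m <= n)%R /\ (n <= M)%R)) ->
  (mu + mu = m + M)%R -> f mu != 0%N ->
  (forall n, (n + n = m + M)%R -> (f n <= 1)%N) ->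
  (forall n, (m + M < n + n)%R -> (n < M)%R -> f n = 0%N) ->
  ((2 <= f m)%N \/ exists e, f e != 0%N /\ (m < e)%R /\ (e + e < m + M)%R) ->
  Goal f.
Proof.
move=> HmM Hfm HfM Hr Hmu Hfmu Hmu1 Hhi Hcase.
pose w := fun (n : int) (c : nat) => if n == m then 1%N else if n == mu then c
  else if n == M then (c - 1)%N else 0%N.
apply: (@decomp _ w).
- by move=> n Hn; rewrite /w; des; lia.
- have Gm : lsel f w m = 1%N by rewrite lselE /w eqxx (negbTE Hfm).
  apply: (@irr_bot _ m).
  + by rewrite Gm.
  + by move=> n; rewrite lselE; have := Hr n; des; lia.
  + by exists m.
  + by exists mu; rewrite lselE /w (negbTE Hfmu); des; lia.
  + move=> e e'; have := Hr e; have := Hr e'; have := Hmu1 e; have := Hmu1 e';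
    rewrite Gm !lselE /w.
    des; move=> *; (split; [lia | move=> *; first [lia | nia]]).
- have GM : lsel f (fun n c => c - w n c)%N M = 1%N.
    rewrite lselE /w (negbTE HfM); des; lia.
  apply: (@irr_top_s _ M m).
  + by rewrite GM.
  + by move=> n; rewrite lselE; have := Hr n; des; lia.
  + by exists M.
  + case: Hcase => [H2|[e [He1 [He2 He3]]]].
      by exists m; rewrite lselE /w (negbTE Hfm); des; lia.
    by exists e; rewrite lselE /w (negbTE He1); des; lia.
  + by move=> e; have := Hr e; have := Hhi e; rewrite !lselE /w; des; lia.
Qed.

Lemma caseIb2 f (m M mu : int) :
  (m < M)%R -> f m != 0%N -> f M != 0%N -> (forall n, f n = 0%N \/ ((m <= n)%R /\ (n <= M)%R)) ->
  (mu + mu = m + M)%R -> f mu != 0%N ->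
  (forall n, (n + n = m + M)%R -> (f n <= 1)%N) ->
  (forall n, (m + M < n + n)%R -> (n < M)%R -> f n = 0%N) ->
  (forall n, (m < n)%R -> (n + n < m + M)%R -> f n = 0%N) ->
  (f m <= 1)%N -> (3 < leval1 f)%N ->
  Goal f.
Proof.
move=> HmM Hfm HfM Hr Hmu Hfmu Hmu1 Hhi Hlo Hm1 HN.
have HM2 : (2 <= f M)%N.
  rewrite (@mass3 f m mu M) in HN; first by have := Hmu1 mu Hmu; lia.
  - by apply/eqP; lia.
  - by apply/eqP; lia.
  - by apply/eqP; lia.
  move=> n /eqP H1 /eqP H2 /eqP H3; have := Hr n; have := Hhi n; have := Hlo n; lia.
have Hm1' : forall n, n = m -> (f n <= 1)%N by move=> n ->.
pose w := fun (n : int) (c : nat) => if n == m then 1%N else if n == M then 1%N else 0%N.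
apply: (@decomp _ w).
- by move=> n Hn; rewrite /w; des; lia.
- have GM : lsel f w M = 1%N by rewrite lselE /w (negbTE HfM); des; lia.
  apply: (@irr_top_s _ M m).
  + by rewrite GM.
  + by move=> n; rewrite lselE; have := Hr n; des; lia.
  + by exists M.
  + by exists m; rewrite lselE /w (negbTE Hfm); des; lia.
  + by move=> e; have := Hr e; rewrite !lselE /w; des; lia.
- have GM : lsel f (fun n c => c - w n c)%N M = (f M - 1)%N.
    rewrite lselE /w (negbTE HfM); des; lia.
  apply: (@irr_top_s _ M mu).
  + by rewrite GM; lia.
  + move=> n; rewrite lselE; have := Hr n; have := Hhi n; have := Hlo n; have := Hm1' n; have := Hmu1 n.
    by rewrite /w; des; lia.
  + by exists mu; have := Hmu1 mu Hmu; rewrite lselE /w (negbTE Hfmu); des; lia.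
  + by exists mu; rewrite lselE /w (negbTE Hfmu); des; lia.
  + move=> e; have := Hr e; have := Hhi e; have := Hlo e; have := Hm1' e; have := Hmu1 e.
    by rewrite !lselE /w; des; lia.
Qed.

Lemma caseIImain f (m M : int) :
  (m < M)%R -> f m != 0%N -> f M != 0%N -> (forall n, f n = 0%N \/ ((m <= n)%R /\ (n <= M)%R)) ->
  (forall n, (n + n = m + M)%R -> f n = 0%N) ->
  ((2 <= f M)%N \/ exists e, f e != 0%N /\ (m + M < e + e)%R /\ (e < M)%R) ->
  ((2 <= f m)%N \/ exists e, f e != 0%N /\ (m < e)%R /\ (e + e < m + M)%R) ->
  Goal f.
Proof.
move=> HmM Hfm HfM Hr Hnomu HcM Hcm.
pose w := fun (n : int) (c : nat) => if n == m then 1%N else if n == M then (c - 1)%N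
  else if (m + M < n + n)%R && (n < M)%R then c else 0%N.
apply: (@decomp _ w).
- by move=> n Hn; rewrite /w; des; lia.
- have Gm : lsel f w m = 1%N by rewrite lselE /w eqxx (negbTE Hfm).
  apply: (@irr_bot_s _ m M).
  + by rewrite Gm.
  + by move=> n; rewrite lselE; have := Hr n; des; lia.
  + by exists m.
  + case: HcM => [H2|[e [He1 [He2 He3]]]].
      by exists M; rewrite lselE /w (negbTE HfM); des; lia.
    by exists e; rewrite lselE /w (negbTE He1); des; lia.
  + by move=> e; have := Hr e; have := Hnomu e; rewrite !lselE /w; des; lia.
- have GM : lsel f (fun n c => c - w n c)%N M = 1%N.
    rewrite lselE /w (negbTE HfM); des; lia.
  apply: (@irr_top_s _ M m).
  + by rewrite GM.
  + by move=> n; rewrite lselE; have := Hr n; des; lia.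
  + by exists M.
  + case: Hcm => [H2|[e [He1 [He2 He3]]]].
      by exists m; rewrite lselE /w (negbTE Hfm); des; lia.
    by exists e; rewrite lselE /w (negbTE He1); des; lia.
  + by move=> e; have := Hr e; have := Hnomu e; rewrite !lselE /w; des; lia.
Qed.

Lemma caseII1a f (m M e1 : int) :
  (m < M)%R -> f m != 0%N -> f M != 0%N -> (forall n, f n = 0%N \/ ((m <= n)%R /\ (n <= M)%R)) ->
  (forall n, (n + n = m + M)%R -> f n = 0%N) ->
  (forall n, (m + M < n + n)%R -> (n < M)%R -> f n = 0%N) ->
  (f M <= 1)%N -> f e1 != 0%N -> (m < e1)%R -> (e1 + e1 < m + M)%R -> (3 < leval1 f)%N ->
  Goal f.
Proof.
move=> HmM Hfm HfM Hr Hnomu Hhi HM1 He1 He1a He1b HN.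
pose w := fun (n : int) (c : nat) => if n == m then 1%N else if n == e1 then 1%N else 0%N.
apply: (@decomp _ w).
- by move=> n Hn; rewrite /w; des; lia.
- have Ge : lsel f w e1 = 1%N by rewrite lselE /w (negbTE He1); des; lia.
  apply: (@irr_top_s _ e1 m).
  + by rewrite Ge.
  + by move=> n; rewrite lselE /w; des; lia.
  + by exists e1.
  + by exists m; rewrite lselE /w (negbTE Hfm); des; lia.
  + by move=> e; rewrite !lselE /w; des; lia.
- set h := lsel f (fun n c => c - w n c)%N.
  have GM : h M = 1%N.
    rewrite /h lselE /w (negbTE HfM); des; lia.
  apply: (@irr_top_s _ M m).
  + by rewrite GM.
  + by move=> n; rewrite /h lselE; have := Hr n; des; lia.
  + by exists M.
  + case: (classic (exists e0, e0 != M /\ h e0 != 0%N)) => [//|Hno]; exfalso.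
    have H0 : forall n, n != M -> h n = 0%N.
      by move=> n Hn; apply/eqP/negPn/negP => Hh; apply: Hno; exists n; split.
    have Hm' : (f m <= 1)%N.
      by have := H0 m ltac:(apply/eqP; lia); rewrite /h lselE /w (negbTE Hfm); des; lia.
    have He' : (f e1 <= 1)%N.
      by have := H0 e1 ltac:(apply/eqP; lia); rewrite /h lselE /w (negbTE He1); des; lia.
    rewrite (@mass3 f m e1 M) in HN; first lia.
    * by apply/eqP; lia.
    * by apply/eqP; lia.
    * by apply/eqP; lia.
    move=> n Hn1 Hn2 Hn3; have := H0 n Hn3; rewrite /h lselE /w.
    by move: Hn1 Hn2 => /negbTE -> /negbTE ->; des; lia.
  + by move=> e; have := Hr e; have := Hnomu e; have := Hhi e; rewrite /h !lselE /w; des; lia.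
Qed.

Lemma caseII1b f (m M : int) :
  (m < M)%R -> f m != 0%N -> f M != 0%N -> (forall n, f n = 0%N \/ ((m <= n)%R /\ (n <= M)%R)) ->
  (forall n, (n + n = m + M)%R -> f n = 0%N) ->
  (forall n, (m + M < n + n)%R -> (n < M)%R -> f n = 0%N) ->
  (forall n, (m < n)%R -> (n + n < m + M)%R -> f n = 0%N) ->
  (f M <= 1)%N -> (3 < leval1 f)%N ->
  Goal f.
Proof.
move=> HmM Hfm HfM Hr Hnomu Hhi Hlo HM1 HN.
have Hout : forall n, n != m -> n != M -> f n = 0%N.
  by move=> n /eqP H1 /eqP H2; have := Hr n; have := Hhi n; have := Hlo n; have := Hnomu n; lia.
have Hm3 : (3 <= f m)%N.
  rewrite (@mass3 f m M (M + 1)%R) in HN; first by have := Hr (M + 1)%R; lia.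
  - by apply/eqP; lia.
  - by apply/eqP; lia.
  - by apply/eqP; lia.
  by move=> n H1 H2 _; apply: Hout.
pose w := fun (n : int) (c : nat) => if n == m then (c - 2)%N else if n == M then c else 0%N.
apply: (@decomp _ w).
- by move=> n Hn; rewrite /w; des; lia.
- have GM : lsel f w M = f M by rewrite lselE /w (negbTE HfM); des; lia.
  apply: (@irr_top_s _ M m).
  + by rewrite GM.
  + by move=> n; rewrite lselE; have := Hr n; des; lia.
  + by exists M; rewrite GM; lia.
  + by exists m; rewrite lselE /w (negbTE Hfm); des; lia.
  + by move=> e; rewrite !lselE /w; des; lia.
- apply: (@irr_two _ m).
  + by rewrite lselE /w (negbTE Hfm); des; lia.
  + move=> n Hn; rewrite lselE /w (negbTE Hn).
    case: (n =P M) => [->|/eqP HnM]; first by des; lia.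
    by rewrite Hout //; des.
Qed.

Lemma caseII2a f (m M e1 : int) :
  (m < M)%R -> f m != 0%N -> f M != 0%N -> (forall n, f n = 0%N \/ ((m <= n)%R /\ (n <= M)%R)) ->
  (forall n, (n + n = m + M)%R -> f n = 0%N) ->
  (forall n, (m < n)%R -> (n + n < m + M)%R -> f n = 0%N) ->
  (f m <= 1)%N -> f e1 != 0%N -> (m + M < e1 + e1)%R -> (e1 < M)%R -> (3 < leval1 f)%N ->
  Goal f.
Proof.
move=> HmM Hfm HfM Hr Hnomu Hlo Hm1 He1 He1a He1b HN.
pose w := fun (n : int) (c : nat) => if n == e1 then 1%N else if n == M then 1%N else 0%N.
apply: (@decomp _ w).
- by move=> n Hn; rewrite /w; des; lia.
- have Ge : lsel f w e1 = 1%N by rewrite lselE /w (negbTE He1); des; lia.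
  apply: (@irr_bot_s _ e1 M).
  + by rewrite Ge.
  + by move=> n; rewrite lselE /w; des; lia.
  + by exists e1.
  + by exists M; rewrite lselE /w (negbTE HfM); des; lia.
  + by move=> e; rewrite !lselE /w; des; lia.
- set h := lsel f (fun n c => c - w n c)%N.
  have Gm : h m = 1%N.
    rewrite /h lselE /w (negbTE Hfm); des; lia.
  apply: (@irr_bot_s _ m M).
  + by rewrite Gm.
  + by move=> n; rewrite /h lselE; have := Hr n; des; lia.
  + by exists m.
  + case: (classic (exists e0, e0 != m /\ h e0 != 0%N)) => [//|Hno]; exfalso.
    have H0 : forall n, n != m -> h n = 0%N.
      by move=> n Hn; apply/eqP/negPn/negP => Hh; apply: Hno; exists n; split.
    have HM' : (f M <= 1)%N.
      by have := H0 M ltac:(apply/eqP; lia); rewrite /h lselE /w (negbTE HfM); des; lia.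
    have He' : (f e1 <= 1)%N.
      by have := H0 e1 ltac:(apply/eqP; lia); rewrite /h lselE /w (negbTE He1); des; lia.
    rewrite (@mass3 f m e1 M) in HN; first lia.
    * by apply/eqP; lia.
    * by apply/eqP; lia.
    * by apply/eqP; lia.
    move=> n Hn1 Hn2 Hn3; have := H0 n Hn1; rewrite /h lselE /w.
    by move: Hn2 Hn3 => /negbTE -> /negbTE ->; des; lia.
  + by move=> e; have := Hr e; have := Hnomu e; have := Hlo e; rewrite /h !lselE /w; des; lia.
Qed.

Lemma caseII2b f (m M : int) :
  (m < M)%R -> f m != 0%N -> f M != 0%N -> (forall n, f n = 0%N \/ ((m <= n)%R /\ (n <= M)%R)) ->
  (forall n, (n + n = m + M)%R -> f n = 0%N) ->
  (forall n, (m + M < n + n)%R -> (n < M)%R -> f n = 0%N) ->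
  (forall n, (m < n)%R -> (n + n < m + M)%R -> f n = 0%N) ->
  (f m <= 1)%N -> (3 < leval1 f)%N ->
  Goal f.
Proof.
move=> HmM Hfm HfM Hr Hnomu Hhi Hlo Hm1 HN.
have Hout : forall n, n != m -> n != M -> f n = 0%N.
  by move=> n /eqP H1 /eqP H2; have := Hr n; have := Hhi n; have := Hlo n; have := Hnomu n; lia.
have HM3 : (3 <= f M)%N.
  rewrite (@mass3 f m M (M + 1)%R) in HN; first by have := Hr (M + 1)%R; lia.
  - by apply/eqP; lia.
  - by apply/eqP; lia.
  - by apply/eqP; lia.
  by move=> n H1 H2 _; apply: Hout.
pose w := fun (n : int) (c : nat) => if n == m then 1%N else if n == M then (c - 2)%N else 0%N.
apply: (@decomp _ w).
- by move=> n Hn; rewrite /w; des; lia.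
- have GM : lsel f w M = (f M - 2)%N by rewrite lselE /w (negbTE HfM); des; lia.
  apply: (@irr_top_s _ M m).
  + by rewrite GM; lia.
  + by move=> n; rewrite lselE; have := Hr n; des; lia.
  + by exists m; rewrite lselE /w (negbTE Hfm); des; lia.
  + by exists m; rewrite lselE /w (negbTE Hfm); des; lia.
  + by move=> e; rewrite !lselE /w; des; lia.
- apply: (@irr_two _ M).
  + by rewrite lselE /w (negbTE HfM); des; lia.
  + move=> n Hn; rewrite lselE /w (negbTE Hn).
    case: (n =P m) => [->|/eqP Hnm]; first by des; lia.
    by rewrite Hout //; des.
Qed.

Lemma main_goal f : (3 < leval1 f)%N -> (1 < #|` lsupp f|)%N -> Goal f.
Proof.
move=> HN Hc.
have [p [q [Hpq [Hp Hq]]]] := card2 Hc; rewrite !lsuppE in Hp Hq.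
have [m [Hfm Hm]] := supp_min Hp.
have [M [HfM HM]] := supp_max Hp.
have HmM : (m < M)%R.
  have := Hm _ Hp; have := Hm _ Hq; have := HM _ Hp; have := HM _ Hq; move/eqP: Hpq; lia.
have Hr : forall n, f n = 0%N \/ ((m <= n)%R /\ (n <= M)%R).
  move=> n; case: (f n =P 0%N) => [|/eqP Hn]; [by left | right; split; [exact: Hm | exact: HM]].
case: (classic (exists mu, (mu + mu = m + M)%R /\ f mu != 0%N)) => [[mu [Hmu Hfmu]]|Hnomu'].
  case: (classic ((2 <= f mu)%N \/ exists e, f e != 0%N /\ (m + M < e + e)%R /\ (e < M)%R)) => [H|H].
    exact: (caseIa HmM Hfm HfM Hr Hmu Hfmu H).
  have Hmu1 : forall n, (n + n = m + M)%R -> (f n <= 1)%N.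
    move=> n Hn; have -> : n = mu by lia.
    by case: (leqP (f mu) 1) => // H2; exfalso; apply: H; left.
  have Hhi : forall n, (m + M < n + n)%R -> (n < M)%R -> f n = 0%N.
    move=> n H1 H2; apply/eqP/negPn/negP => H3; apply: H; right; exists n; split => //.
  case: (classic ((2 <= f m)%N \/ exists e, f e != 0%N /\ (m < e)%R /\ (e + e < m + M)%R)) => [H'|H'].
    exact: (caseIb1 HmM Hfm HfM Hr Hmu Hfmu Hmu1 Hhi H').
  have Hlo : forall n, (m < n)%R -> (n + n < m + M)%R -> f n = 0%N.
    move=> n H1 H2; apply/eqP/negPn/negP => H3; apply: H'; right; exists n; split => //.
  have Hm1 : (f m <= 1)%N by case: (leqP (f m) 1) => // H2; exfalso; apply: H'; left.
  exact: (caseIb2 HmM Hfm HfM Hr Hmu Hfmu Hmu1 Hhi Hlo Hm1 HN).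
have Hnomu : forall n, (n + n = m + M)%R -> f n = 0%N.
  move=> n Hn; apply/eqP/negPn/negP => H3; apply: Hnomu'; exists n; split => //.
case: (classic (exists e, f e != 0%N /\ (m + M < e + e)%R /\ (e < M)%R)) => [HHi|HnHi].
  case: (classic (exists e, f e != 0%N /\ (m < e)%R /\ (e + e < m + M)%R)) => [HLo|HnLo].
    exact: (caseIImain HmM Hfm HfM Hr Hnomu (or_intror HHi) (or_intror HLo)).
  have Hlo : forall n, (m < n)%R -> (n + n < m + M)%R -> f n = 0%N.
    move=> n H1 H2; apply/eqP/negPn/negP => H3; apply: HnLo; exists n; split => //.
  case: (leqP 2 (f m)) => Hm2.
    exact: (caseIImain HmM Hfm HfM Hr Hnomu (or_intror HHi) (or_introl Hm2)).
  have [e [He1 [He2 He3]]] := HHi.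
  exact: (caseII2a HmM Hfm HfM Hr Hnomu Hlo ltac:(lia) He1 He2 He3 HN).
have Hhi : forall n, (m + M < n + n)%R -> (n < M)%R -> f n = 0%N.
  move=> n H1 H2; apply/eqP/negPn/negP => H3; apply: HnHi; exists n; split => //.
case: (leqP 2 (f M)) => HM2.
  case: (classic (exists e, f e != 0%N /\ (m < e)%R /\ (e + e < m + M)%R)) => [HLo|HnLo].
    exact: (caseIImain HmM Hfm HfM Hr Hnomu (or_introl HM2) (or_intror HLo)).
  have Hlo : forall n, (m < n)%R -> (n + n < m + M)%R -> f n = 0%N.
    move=> n H1 H2; apply/eqP/negPn/negP => H3; apply: HnLo; exists n; split => //.
  case: (leqP 2 (f m)) => Hm2.
    exact: (caseIImain HmM Hfm HfM Hr Hnomu (or_introl HM2) (or_introl Hm2)).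
  exact: (caseII2b HmM Hfm HfM Hr Hnomu Hhi Hlo ltac:(lia) HN).
case: (classic (exists e, f e != 0%N /\ (m < e)%R /\ (e + e < m + M)%R)) => [HLo|HnLo].
  have [e [He1 [He2 He3]]] := HLo.
  exact: (caseII1a HmM Hfm HfM Hr Hnomu Hhi ltac:(lia) He1 He2 He3 HN).
have Hlo : forall n, (m < n)%R -> (n + n < m + M)%R -> f n = 0%N.
  move=> n H1 H2; apply/eqP/negPn/negP => H3; apply: HnLo; exists n; split => //.
exact: (caseII1b HmM Hfm HfM Hr Hnomu Hhi Hlo ltac:(lia) HN).
Qed.

Theorem theorem1p1 (f : lpoly) :
  (3 < leval1 f)%N -> (1 < #|` lsupp f|)%N ->
  exists g h : lpoly, lirreducible g /\ lirreducible h /\ f = ladd g h.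
Proof. exact: main_goal. Qed.
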